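(* Let $0<\alpha\le\beta<\infty$ and $\varphi\in\mathcal{K}(\alpha,\beta)$. Then for all $a,b\in\mathbb{C}\setminus\{0\}$: (i) if $\beta\le1$, then $|\varphi(|a|)\mathrm{sign}(a)-\varphi(|b|)\mathrm{sign}(b)|\le\varphi(|a-b|)+4\frac{|a-b|}{|a|+|b|}\varphi(|a|+|b|)$; (ii) if $\beta\ge1$, then $|\varphi(|a|)\mathrm{sign}(a)-\varphi(|b|)\mathrm{sign}(b)|\le(2\beta+4)\frac{|a-b|}{|a|+|b|}\varphi(|a|+|b|)$.
   Context: For $0<\alpha\le\beta<\infty$, a non-decreasing continuous function $\varphi:[0,\infty)\to[0,\infty)$ with $\varphi(0)=0$ is in the class $\mathcal{K}(\alpha,\beta)$ if $\varphi(t)/t^\alpha$ is non-decreasing and $\varphi(t)/t^\beta$ is non-increasing on $t>0$. For $a\in\mathbb{C}\setminus\{0\}$, $\mathrm{sign}(a)=a/|a|$. *)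

(* Defs.v *)
From Stdlib Require Import Reals.
Open Scope R_scope.

(* The complex plane as pairs (Re, Im). *)
Definition Cplx := (R * R)%type.
Definition Cnorm (z : Cplx) : R := sqrt (fst z * fst z + snd z * snd z).
Definition Csub (z w : Cplx) : Cplx := (fst z - fst w, snd z - snd w).
Definition Cscale (r : R) (z : Cplx) : Cplx := (r * fst z, r * snd z).
Definition C0 : Cplx := (0, 0).

Definition Csign (a : Cplx) : Cplx := Cscale (/ Cnorm a) a.

(* phi : [0,oo) -> [0,oo), modelled as a function R -> R whose behaviour
   on negative reals is irrelevant. *)
Definition class_K (alpha beta : R) (phi : R -> R) : Prop :=
  (forall t, 0 <= t -> limit1_in phi (fun x => 0 <= x) (phi t) t) /\
  (forall t, 0 <= t -> 0 <= phi t) /\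
  phi 0 = 0 /\
  (forall s t, 0 <= s -> s <= t -> phi s <= phi t) /\
  (forall s t, 0 < s -> s <= t -> phi s / Rpower s alpha <= phi t / Rpower t alpha) /\
  (forall s t, 0 < s -> s <= t -> phi t / Rpower t beta <= phi s / Rpower s beta).

(* Main.v *)
Require Import Defs.
From Stdlib Require Import Reals Lra Psatz.
Open Scope R_scope.

Lemma exp_le' x y : x <= y -> exp x <= exp y.
Proof. intros [H|H]; [left; now apply exp_increasing | subst; lra]. Qed.

Lemma exp_minus x y : exp (x - y) = exp x / exp y.
Proof. unfold Rminus, Rdiv. rewrite exp_plus, exp_Ropp. ring. Qed.

Lemma ln_le' s r : 0 < s -> s <= r -> ln s <= ln r.
Proof. intros Hs [H|H]; [left; apply ln_increasing; lra | subst; lra]. Qed.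

Lemma ratio_ge s r b : 0 < s -> s <= r -> b <= 1 ->
  s / r <= Rpower s b / Rpower r b.
Proof.
  intros Hs Hsr Hb. unfold Rpower.
  rewrite <- exp_minus.
  rewrite <- (exp_ln s) at 1 by lra. rewrite <- (exp_ln r) at 1 by lra.
  rewrite <- exp_minus. apply exp_le'.
  pose proof (ln_le' s r Hs Hsr). nra.
Qed.

Lemma ratio_bern s r b : 0 < s -> s <= r -> 1 <= b ->
  1 - b * (1 - s / r) <= Rpower s b / Rpower r b.
Proof.
  intros Hs Hsr Hb. unfold Rpower.
  rewrite <- exp_minus.
  set (t := s / r).
  assert (Ht : 0 < t) by (unfold t; apply Rdiv_lt_0_compat; lra).
  assert (HL : ln t = ln s - ln r).
  { unfold t. rewrite <- (exp_ln s) at 1 by lra. rewrite <- (exp_ln r) at 1 by lra.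
    rewrite <- exp_minus. now rewrite ln_exp. }
  replace (b * ln s - b * ln r) with (ln t + (b - 1) * ln t) by (rewrite HL; ring).
  rewrite exp_plus, exp_ln by lra.
  pose proof (exp_ineq1_le ((b-1) * ln t)).
  assert (H1 : ln (/ t) <= / t - 1).
  { pose proof (exp_ineq1_le (ln (/ t))). rewrite exp_ln in H0.
    lra. apply Rinv_0_lt_compat; lra. }
  rewrite ln_Rinv in H1 by lra.
  assert (H2 : t - 1 <= t * ln t).
  { assert (t * (- ln t) <= t * (/ t - 1)) by (apply Rmult_le_compat_l; lra).
    replace (t * (/t - 1)) with (1 - t) in H0 by (field; lra). lra. }
  nra.
Qed.

Lemma Rpower_pos x b : 0 < Rpower x b.
Proof. unfold Rpower. apply exp_pos. Qed.

Lemma phi_lower alpha beta phi x r : class_K alpha beta phi -> 0 < x -> x <= r ->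
  phi r * (Rpower x beta / Rpower r beta) <= phi x.
Proof.
  intros (_ & Hpos & H0 & Hmon & Ha & Hb) Hx Hxr.
  pose proof (Hb x r Hx Hxr).
  pose proof (Rpower_pos x beta). pose proof (Rpower_pos r beta).
  apply Rmult_le_compat_r with (r := Rpower x beta) in H; [|lra].
  unfold Rdiv in *. 
  replace (phi x * / Rpower x beta * Rpower x beta) with (phi x) in H by (field; lra).
  lra.
Qed.

Lemma phi_sub alpha beta phi s r : class_K alpha beta phi -> beta <= 1 -> 0 < s -> s <= r ->
  phi r <= phi s + phi (r - s).
Proof.
  intros HK Hb Hs Hsr.
  pose proof HK as (_ & Hpos & H0 & Hmon & _ & _).
  destruct (Req_dec r s) as [E|E].
  { subst. replace (s - s) with 0 by ring. lra. }
  assert (Hr0 : 0 <= phi r) by (apply Hpos; lra).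
  pose proof (phi_lower _ _ _ s r HK Hs Hsr).
  pose proof (phi_lower _ _ _ (r - s) r HK ltac:(lra) ltac:(lra)).
  pose proof (ratio_ge s r beta Hs Hsr Hb).
  pose proof (ratio_ge (r - s) r beta ltac:(lra) ltac:(lra) Hb).
  assert (phi r * (s / r) <= phi s) by nra.
  assert (phi r * ((r - s) / r) <= phi (r - s)) by nra.
  replace (phi r) with (phi r * (s / r) + phi r * ((r - s) / r)) at 1 by (field; lra).
  lra.
Qed.

Lemma phi_diff_big alpha beta phi s r : class_K alpha beta phi -> 1 <= beta -> 0 < s -> s <= r ->
  phi r - phi s <= 2 * beta * ((r - s) / (r + s)) * phi (r + s).
Proof.
  intros HK Hb Hs Hsr.
  pose proof HK as (_ & Hpos & H0 & Hmon & _ & _).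
  assert (Hr0 : 0 <= phi r) by (apply Hpos; lra).
  assert (Hrs : phi r <= phi (r + s)) by (apply Hmon; lra).
  pose proof (phi_lower _ _ _ s r HK Hs Hsr).
  pose proof (ratio_bern s r beta Hs Hsr Hb).
  assert (phi r * (1 - beta * (1 - s / r)) <= phi s) by nra.
  assert (E1 : 1 - s / r = (r - s) / r) by (field; lra).
  assert (E2 : (r - s) / r <= 2 * ((r - s) / (r + s))).
  { apply Rmult_le_reg_r with (r * (r + s)). nra.
    replace ((r - s) / r * (r * (r + s))) with ((r - s) * (r + s)) by (field; lra).
    replace (2 * ((r - s) / (r + s)) * (r * (r + s))) with (2 * r * (r - s)) by (field; lra).
    nra. }
  assert (0 <= (r - s) / r) by (unfold Rdiv; apply Rmult_le_pos; [lra | left; apply Rinv_0_lt_compat; lra]).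
  rewrite E1 in H1.
  set (q := (r - s) / r) in *. set (w := (r - s) / (r + s)) in *.
  assert (phi r * (beta * q) <= phi r * (beta * (2 * w))) by (apply Rmult_le_compat_l; nra).
  assert (phi r * (beta * (2 * w)) <= phi (r + s) * (beta * (2 * w))) by (apply Rmult_le_compat_r; nra).
  nra.
Qed.

Lemma ss_pos x y : 0 <= x * x + y * y.
Proof. pose proof (Rle_0_sqr x); pose proof (Rle_0_sqr y); unfold Rsqr in *; lra. Qed.

Lemma sqrt_le_sum X A B : 0 <= A -> 0 <= B -> X <= (A + B) * (A + B) -> sqrt X <= A + B.
Proof.
  intros HA HB H. rewrite <- (sqrt_square (A + B)) by lra.
  apply sqrt_le_1_alt. exact H.
Qed.

Lemma tri x1 x2 y1 y2 :
  sqrt ((x1+y1)*(x1+y1)+(x2+y2)*(x2+y2)) <= sqrt (x1*x1+x2*x2) + sqrt (y1*y1+y2*y2).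
Proof.
  set (nx := sqrt (x1*x1+x2*x2)). set (ny := sqrt (y1*y1+y2*y2)).
  assert (Hx : nx * nx = x1*x1+x2*x2) by (apply sqrt_sqrt; apply ss_pos).
  assert (Hy : ny * ny = y1*y1+y2*y2) by (apply sqrt_sqrt; apply ss_pos).
  assert (Px : 0 <= nx) by apply sqrt_pos. assert (Py : 0 <= ny) by apply sqrt_pos.
  apply sqrt_le_sum; auto.
  assert (C : x1*y1 + x2*y2 <= nx * ny).
  { destruct (Rle_dec (x1*y1+x2*y2) 0). nra.
    assert ((x1*y1+x2*y2)*(x1*y1+x2*y2) <= (nx*ny)*(nx*ny)).
    { replace ((nx*ny)*(nx*ny)) with ((nx*nx)*(ny*ny)) by ring. rewrite Hx, Hy.
      pose proof (Rle_0_sqr (x1*y2 - x2*y1)); unfold Rsqr in *; nra. }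
    destruct (Rle_dec (x1*y1+x2*y2) (nx*ny)) as [|N]; auto.
    assert (0 <= nx*ny) by nra.
    assert (nx*ny < x1*y1+x2*y2) by lra. nra. }
  nra.
Qed.

Lemma sqrt_sq_eq x : 0 <= x -> sqrt (x * x) = x.
Proof. apply sqrt_square. Qed.

Lemma core r s p q u1 u2 v1 v2 :
  u1*u1+u2*u2 = 1 -> v1*v1+v2*v2 = 1 -> 0 < s -> s <= r -> 0 <= q -> q <= p ->
  let D := sqrt ((r*u1 - s*v1)*(r*u1 - s*v1) + (r*u2 - s*v2)*(r*u2 - s*v2)) in
  sqrt ((p*u1 - q*v1)*(p*u1 - q*v1) + (p*u2 - q*v2)*(p*u2 - q*v2))
   <= (p - q) + q * (2 * (D / (r + s))) /\ r - s <= D.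
Proof.
  intros Hu Hv Hs Hsr Hq Hpq D.
  set (W := sqrt ((u1-v1)*(u1-v1)+(u2-v2)*(u2-v2))).
  assert (HD : D * D = (r*u1 - s*v1)*(r*u1 - s*v1) + (r*u2 - s*v2)*(r*u2 - s*v2))
    by (unfold D; apply sqrt_sqrt; apply ss_pos).
  assert (HW : W * W = (u1-v1)*(u1-v1)+(u2-v2)*(u2-v2)) by (apply sqrt_sqrt; apply ss_pos).
  assert (PD : 0 <= D) by (unfold D; apply sqrt_pos). assert (PW : 0 <= W) by apply sqrt_pos.
  assert (Id : 4 * (D * D) - (r+s)*(r+s)*(W*W) =
     (r-s)*(r-s)*((u1+v1)*(u1+v1)+(u2+v2)*(u2+v2))
     + 2*(r*r-s*s)*((u1*u1+u2*u2-1)-(v1*v1+v2*v2-1))).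
  { rewrite HD, HW. ring. }
  rewrite Hu, Hv in Id.
  assert (W2 : W * (r + s) <= 2 * D).
  { pose proof (ss_pos (u1+v1) (u2+v2)).
    assert (0 <= (r-s)*(r-s)) by nra.
    assert ((W*(r+s))*(W*(r+s)) <= (2*D)*(2*D)).
    { replace ((W*(r+s))*(W*(r+s))) with ((r+s)*(r+s)*(W*W)) by ring.
      replace ((2*D)*(2*D)) with (4*(D*D)) by ring. nra. }
    destruct (Rle_dec (W*(r+s)) (2*D)) as [|N]; auto.
    assert (0 <= W*(r+s)) by nra. nra. }
  split.
  - pose proof (tri ((p-q)*u1) ((p-q)*u2) (q*(u1-v1)) (q*(u2-v2))) as T.
    replace ((p - q) * u1 + q * (u1 - v1)) with (p*u1 - q*v1) in T by ring.
    replace ((p - q) * u2 + q * (u2 - v2)) with (p*u2 - q*v2) in T by ring.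
    replace ((p - q) * u1 * ((p - q) * u1) + (p - q) * u2 * ((p - q) * u2))
      with ((p-q)*(p-q)) in T by (transitivity ((p-q)*(p-q)*(u1*u1+u2*u2)); [rewrite Hu; ring | ring]).
    replace (q * (u1 - v1) * (q * (u1 - v1)) + q * (u2 - v2) * (q * (u2 - v2)))
      with ((q*q)*(W*W)) in T by (rewrite HW; ring).
    rewrite sqrt_sq_eq in T by lra.
    replace (q * q * (W * W)) with ((q*W)*(q*W)) in T by ring.
    rewrite sqrt_sq_eq in T by nra.
    assert (W <= 2 * (D / (r + s))).
    { apply Rmult_le_reg_r with (r + s). lra.
      replace (2 * (D / (r + s)) * (r + s)) with (2 * D) by (field; lra). lra. }
    nra.
  - assert (Id2 : D * D - (r - s)*(r - s) = r * s * ((u1-v1)*(u1-v1)+(u2-v2)*(u2-v2))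
        + (r*r-r*s)*(u1*u1+u2*u2-1) + (s*s-r*s)*(v1*v1+v2*v2-1)).
    { rewrite HD. ring. }
    rewrite Hu, Hv in Id2.
    pose proof (ss_pos (u1-v1) (u2-v2)).
    assert (0 <= r * s * ((u1-v1)*(u1-v1)+(u2-v2)*(u2-v2))) by (apply Rmult_le_pos; nra).
    replace (1 - 1) with 0 in Id2 by ring.
    assert ((r-s)*(r-s) <= D*D) by lra.
    destruct (Rle_dec (r - s) D) as [|N]; auto.
    nra.
Qed.

Lemma Cnorm_pos a : a <> C0 -> 0 < Cnorm a.
Proof.
  destruct a as [a1 a2]; intros H; unfold Cnorm; simpl.
  apply sqrt_lt_R0.
  destruct (Req_dec a1 0); destruct (Req_dec a2 0).
  - subst. exfalso; apply H; reflexivity.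
  - pose proof (Rle_0_sqr a1). assert (0 < a2 * a2) by nra. unfold Rsqr in *; lra.
  - assert (0 < a1 * a1) by nra. pose proof (Rle_0_sqr a2). unfold Rsqr in *; lra.
  - assert (0 < a1 * a1) by nra. nra.
Qed.

Lemma Csub_sym x y : Cnorm (Csub x y) = Cnorm (Csub y x).
Proof. destruct x, y; unfold Cnorm, Csub; simpl. f_equal; ring. Qed.

Lemma geom (phi : R -> R) a b : a <> C0 -> b <> C0 -> Cnorm b <= Cnorm a ->
  0 <= phi (Cnorm b) -> phi (Cnorm b) <= phi (Cnorm a) ->
  Cnorm (Csub (Cscale (phi (Cnorm a)) (Csign a)) (Cscale (phi (Cnorm b)) (Csign b)))
  <= (phi (Cnorm a) - phi (Cnorm b)) + phi (Cnorm b) * (2 * (Cnorm (Csub a b) / (Cnorm a + Cnorm b)))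
  /\ Cnorm a - Cnorm b <= Cnorm (Csub a b).
Proof.
  intros Ha Hb Hsr Hq Hpq.
  pose proof (Cnorm_pos a Ha) as Hr. pose proof (Cnorm_pos b Hb) as Hs.
  destruct a as [a1 a2], b as [b1 b2].
  assert (Er : Cnorm (a1, a2) * Cnorm (a1, a2) = a1*a1+a2*a2) by (apply sqrt_sqrt; apply ss_pos).
  assert (Es : Cnorm (b1, b2) * Cnorm (b1, b2) = b1*b1+b2*b2) by (apply sqrt_sqrt; apply ss_pos).
  unfold Csign, Csub, Cscale; simpl fst; simpl snd.
  set (r := Cnorm (a1, a2)) in *. set (s := Cnorm (b1, b2)) in *.
  set (p := phi r) in *. set (q := phi s) in *.
  assert (Hr0 : r <> 0) by (apply Rgt_not_eq; exact Hr).
  assert (Hs0 : s <> 0) by (apply Rgt_not_eq; exact Hs).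
  assert (Hu : (/r*a1)*(/r*a1) + (/r*a2)*(/r*a2) = 1).
  { transitivity ((a1*a1+a2*a2)/(r*r)). field. auto. rewrite <- Er. field. auto. }
  assert (Hv : (/s*b1)*(/s*b1) + (/s*b2)*(/s*b2) = 1).
  { transitivity ((b1*b1+b2*b2)/(s*s)). field. auto. rewrite <- Es. field. auto. }
  pose proof (core r s p q _ _ _ _ Hu Hv Hs Hsr Hq Hpq) as [C1 C2].
  replace (r * (/ r * a1)) with a1 in C1, C2 by (field; auto).
  replace (r * (/ r * a2)) with a2 in C1, C2 by (field; auto).
  replace (s * (/ s * b1)) with b1 in C1, C2 by (field; auto).
  replace (s * (/ s * b2)) with b2 in C1, C2 by (field; auto).
  split; [exact C1 | exact C2].
Qed.

Lemma main_ord (alpha beta : R) (phi : R -> R)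
  (Hphi : class_K alpha beta phi)
  (a b : Cplx) (Ha : a <> C0) (Hb : b <> C0) (Hsr : Cnorm b <= Cnorm a) :
  (beta <= 1 ->
     Cnorm (Csub (Cscale (phi (Cnorm a)) (Csign a)) (Cscale (phi (Cnorm b)) (Csign b)))
     <= phi (Cnorm (Csub a b))
        + 4 * (Cnorm (Csub a b) / (Cnorm a + Cnorm b)) * phi (Cnorm a + Cnorm b)) /\
  (1 <= beta ->
     Cnorm (Csub (Cscale (phi (Cnorm a)) (Csign a)) (Cscale (phi (Cnorm b)) (Csign b)))
     <= (2 * beta + 4) * (Cnorm (Csub a b) / (Cnorm a + Cnorm b)) * phi (Cnorm a + Cnorm b)).
Proof.
  pose proof (Cnorm_pos a Ha) as Hr. pose proof (Cnorm_pos b Hb) as Hs.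
  pose proof Hphi as (_ & Hpos & H0 & Hmon & _ & _).
  assert (Hq : 0 <= phi (Cnorm b)) by (apply Hpos; lra).
  assert (Hpq : phi (Cnorm b) <= phi (Cnorm a)) by (apply Hmon; lra).
  destruct (geom phi a b Ha Hb Hsr Hq Hpq) as [G1 G2].
  set (r := Cnorm a) in *. set (s := Cnorm b) in *. set (D := Cnorm (Csub a b)) in *.
  set (L := Cnorm (Csub _ _)) in *.
  assert (Ht : 0 <= D / (r + s)) by (unfold Rdiv; apply Rmult_le_pos; [lra | left; apply Rinv_0_lt_compat; lra]).
  assert (Hqs : phi s <= phi (r + s)) by (apply Hmon; lra).
  assert (T1 : phi s * (2 * (D / (r + s))) <= phi (r + s) * (2 * (D / (r + s))))
    by (apply Rmult_le_compat_r; lra).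
  assert (Hrs0 : 0 <= phi (r + s)) by (apply Hpos; lra).
  split; intros Hb'.
  - pose proof (phi_sub _ _ _ s r Hphi Hb' Hs Hsr).
    assert (phi (r - s) <= phi D) by (apply Hmon; lra).
    assert (0 <= D / (r + s) * phi (r + s)) by (apply Rmult_le_pos; lra).
    nra.
  - pose proof (phi_diff_big _ _ _ s r Hphi Hb' Hs Hsr).
    assert ((r - s) / (r + s) <= D / (r + s)).
    { unfold Rdiv. apply Rmult_le_compat_r; [left; apply Rinv_0_lt_compat; lra | lra]. }
    assert (2 * beta * ((r - s) / (r + s)) * phi (r + s) <= 2 * beta * (D / (r + s)) * phi (r + s)).
    { apply Rmult_le_compat_r; [lra|]. apply Rmult_le_compat_l; lra. }
    assert (0 <= D / (r + s) * phi (r + s)) by (apply Rmult_le_pos; lra).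
    nra.
Qed.

Theorem mainTheorem9 (alpha beta : R) (phi : R -> R)
  (Halpha : 0 < alpha) (Hab : alpha <= beta) (Hphi : class_K alpha beta phi)
  (a b : Cplx) (Ha : a <> C0) (Hb : b <> C0) :
  (beta <= 1 ->
     Cnorm (Csub (Cscale (phi (Cnorm a)) (Csign a)) (Cscale (phi (Cnorm b)) (Csign b)))
     <= phi (Cnorm (Csub a b))
        + 4 * (Cnorm (Csub a b) / (Cnorm a + Cnorm b)) * phi (Cnorm a + Cnorm b)) /\
  (1 <= beta ->
     Cnorm (Csub (Cscale (phi (Cnorm a)) (Csign a)) (Cscale (phi (Cnorm b)) (Csign b)))
     <= (2 * beta + 4) * (Cnorm (Csub a b) / (Cnorm a + Cnorm b)) * phi (Cnorm a + Cnorm b)).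
Proof.
  destruct (Rle_dec (Cnorm b) (Cnorm a)) as [H|H].
  - exact (main_ord alpha beta phi Hphi a b Ha Hb H).
  - destruct (main_ord alpha beta phi Hphi b a Hb Ha ltac:(lra)) as [M1 M2].
    rewrite (Csub_sym (Cscale _ (Csign a))), (Csub_sym a b), (Rplus_comm (Cnorm a)).
    split; assumption.
Qed.
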